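(* Let $p\in\mathbb{F}_2[x_1,\dots,x_n]$ be a uniformly chosen polynomial of degree $3$. Then the probability that there exists an affine subspace $A\subset\mathbb{F}_2^n$ of co-dimension at most $t=n-n^{3/4}$ such that $p$ restricted to $A$ has degree at most $2$ is at most $2^{-\Omega(n^2)}$.
   Context: Polynomials are taken as Boolean functions in algebraic normal form (sums of multilinear monomials). The restriction of $p$ to an affine subspace $A$ given by independent affine equations $\ell_1,\dots,\ell_{t'}$ is obtained by successively using each $\ell_j$ to eliminate one variable (substituting it by an affine expression in the others) and reducing to algebraic normal form; its degree does not depend on which variables are eliminated. *)

(* Defs.v *)
From mathcomp Require Import all_boot all_algebra.
Set Implicit Arguments. Unset Strict Implicit. Unset Printing Implicit Defensive.
Import GRing.Theory.
Local Open Scope ring_scope.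

(* A Boolean polynomial in ANF over F_2 in variables x_0..x_{n-1} is its set of
   monomials (a monomial = the set of variables it contains). *)
Definition anf (n : nat) := {set {set 'I_n}}.

Definition anf_eval (n : nat) (P : anf n) (x : 'rV['F_2]_n) : 'F_2 :=
  \sum_(S in P) \prod_(i in S) x 0 i.

Definition anf_deg_le (n : nat) (P : anf n) (d : nat) : bool :=
  [forall S in P, #|S| <= d]%N.

Definition fun_deg_le (m : nat) (f : 'rV['F_2]_m -> 'F_2) (d : nat) : bool :=
  [exists Q : anf m, anf_deg_le Q d && [forall y, f y == anf_eval Q y]].

(* polynomials of degree at most 3 in n variables (uniform sample space) *)
Definition polys3 (n : nat) : {set anf n} := [set P | anf_deg_le P 3].

(* P restricted to some affine subspace A of dimension m (codimension n - m)
   has degree <= d.  A = { y *m M + b | y in F_2^m } with M of full row rank m;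
   the restriction is P composed with this affine parametrization. *)
Definition restr_deg_le (n m : nat) (P : anf n) (d : nat) : bool :=
  [exists M : 'M['F_2]_(m, n), [exists b : 'rV['F_2]_n,
     row_free M && fun_deg_le (fun y => anf_eval P (y *m M + b)) d]].

(* bad event: some affine subspace of codimension at most n - n^(3/4)
   (i.e. dimension m with m >= n^(3/4), i.e. m^4 >= n^3) on which P has degree <= 2 *)
Definition bad3 (n : nat) : {set anf n} :=
  [set P in polys3 n | [exists m : 'I_n.+1,
       (n ^ 3 <= m ^ 4)%N && restr_deg_le m P 2]].

(* Main.v *)
Require Import Defs.
From mathcomp Require Import all_boot all_algebra.
From mathcomp Require Import ring zify.
Set Implicit Arguments. Unset Strict Implicit. Unset Printing Implicit Defensive.
Import GRing.Theory.
Local Open Scope ring_scope.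

Lemma F2char : 2 \in [pchar 'F_2].
Proof. exact: pchar_Fp. Qed.

Lemma F2_addrr (x : 'F_2) : x + x = 0.
Proof. exact: addrr_pchar2 F2char x. Qed.

Lemma F2_cases (x : 'F_2) : x = 0 \/ x = 1.
Proof.
case: x => [[|[|k]]] Hk; [left|right|]; try by apply: val_inj.
by [].
Qed.

Lemma F2_idem (x : 'F_2) : x * x = x.
Proof. by case: (F2_cases x) => ->; rewrite ?mul0r ?mul1r. Qed.

Definition symd n (P Q : anf n) : anf n := [set S | (S \in P) != (S \in Q)].

Lemma eval_symd n (P Q : anf n) x :
  anf_eval (symd P Q) x = anf_eval P x + anf_eval Q x.
Proof.
rewrite /anf_eval (big_mkcond (fun S => S \in symd P Q)) (big_mkcond (fun S => S \in P)).
rewrite (big_mkcond (fun S => S \in Q)) -big_split /=; apply: eq_bigr => S _.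
rewrite inE; case: (S \in P); case: (S \in Q) => //=; rewrite ?addr0 ?add0r //.
by rewrite F2_addrr.
Qed.

Definition isrep n d (f : 'rV['F_2]_n -> 'F_2) :=
  exists P : anf n, anf_deg_le P d /\ forall x, f x = anf_eval P x.

Lemma repr0 n d : isrep d (fun _ : 'rV['F_2]_n => 0).
Proof.
exists set0; split; first by apply/forallP => S; rewrite inE.
by move=> x; rewrite /anf_eval big_set0.
Qed.

Lemma repr_add n d (f g : 'rV['F_2]_n -> 'F_2) :
  isrep d f -> isrep d g -> isrep d (fun x => f x + g x).
Proof.
move=> [P [HP eP]] [Q [HQ eQ]]; exists (symd P Q); split.
  apply/forallP => S; apply/implyP; rewrite inE.
  case HS: (S \in P).
    by move=> _; move/forallP: HP => /(_ S); rewrite HS.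
  by move=> HS'; move/forallP: HQ => /(_ S) /implyP; apply; move: HS'; by case: (S \in Q).
by move=> x; rewrite eval_symd eP eQ.
Qed.

Lemma repr_ext n d (f g : 'rV['F_2]_n -> 'F_2) :
  (forall x, f x = g x) -> isrep d f -> isrep d g.
Proof. by move=> e [P [HP eP]]; exists P; split => // x; rewrite -e. Qed.

Lemma repr_sum_seq n d (I : Type) (s : seq I) (F : I -> 'rV['F_2]_n -> 'F_2) :
  (forall i, isrep d (F i)) -> isrep d (fun x => \sum_(i <- s) F i x).
Proof.
move=> H; elim: s => [|a s IH].
  by apply: (repr_ext _ (@repr0 n d)) => x; rewrite big_nil.
apply: (repr_ext _ (repr_add (H a) IH)) => x; by rewrite big_cons.
Qed.

Lemma repr_sum n d (I : finType) (F : I -> 'rV['F_2]_n -> 'F_2) :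
  (forall i, isrep d (F i)) -> isrep d (fun x => \sum_i F i x).
Proof.
move=> H; apply: (repr_ext _ (repr_sum_seq (index_enum I) H)) => x.
by [].
Qed.

Lemma repr_scale n d (c : 'F_2) (f : 'rV['F_2]_n -> 'F_2) :
  isrep d f -> isrep d (fun x => c * f x).
Proof.
move=> H; case: (F2_cases c) => ->.
  by apply: (repr_ext _ (@repr0 n d)) => x; rewrite mul0r.
by apply: (repr_ext _ H) => x; rewrite mul1r.
Qed.

Lemma repr_mono n d e (f : 'rV['F_2]_n -> 'F_2) :
  (d <= e)%N -> isrep d f -> isrep e f.
Proof.
move=> le [P [HP eP]]; exists P; split => //.
apply/forallP => S; apply/implyP => HS.
by move/forallP: HP => /(_ S) /implyP /(_ HS) /leq_trans; apply.
Qed.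

Lemma repr_mon n (S : {set 'I_n}) :
  isrep #|S| (fun x : 'rV['F_2]_n => \prod_(i in S) x 0 i).
Proof.
exists [set S]; split.
  by apply/forallP => T; apply/implyP; rewrite inE => /eqP ->.
by move=> x; rewrite /anf_eval big_set1.
Qed.

Lemma mon_mul n (x : 'rV['F_2]_n) i (S : {set 'I_n}) :
  x 0 i * \prod_(j in S) x 0 j = \prod_(j in i |: S) x 0 j.
Proof.
case: (boolP (i \in S)) => Hi.
  rewrite (setUidPr _); last by rewrite sub1set.
  by rewrite (bigD1 i) //= mulrA F2_idem.
by rewrite big_setU1.
Qed.

Lemma repr_mulx n d i (f : 'rV['F_2]_n -> 'F_2) :
  isrep d f -> isrep d.+1 (fun x => x 0 i * f x).
Proof.
move=> [P [HP eP]].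
have : isrep d.+1 (fun x => \sum_(S : {set 'I_n}) (if S \in P then \prod_(j in i |: S) x 0 j else 0)).
  apply: (@repr_sum n d.+1 _ (fun S x => if S \in P then \prod_(j in i |: S) x 0 j else 0)) => S.
  case HS: (S \in P); last exact: repr0.
  apply: (repr_mono _ (repr_mon (i |: S))).
  have HSd : (#|S| <= d)%N by move/forallP: HP => /(_ S) /implyP; apply.
  rewrite cardsU1; case: (i \in S) => /=; rewrite ?add0n ?add1n //.
  exact: leqW.
apply: repr_ext => x; rewrite eP /anf_eval mulr_sumr.
rewrite [RHS](big_mkcond (fun S => S \in P)); apply: eq_bigr => S _.
by case: ifP; rewrite ?mulr0 // mon_mul.
Qed.

Local Close Scope ring_scope.

Local Open Scope ring_scope.

Definition aff n m (N : 'M['F_2]_(n, m)) (b : 'rV['F_2]_n) k (x : 'rV['F_2]_n) : 'F_2 :=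
  ((x + b) *m N) 0 k.

Lemma repr_mulaff n m (N : 'M['F_2]_(n, m)) b (k : 'I_m) (d : nat) (f : 'rV['F_2]_n -> 'F_2) :
  isrep d f -> isrep d.+1 (fun x => aff N b k x * f x).
Proof.
move=> H.
have H1 := @repr_sum n d.+1 _ (fun i x => N i k * (x 0 i * f x) + (b 0 i * N i k) * f x)
  (fun i => repr_add (repr_scale _ (repr_mulx i H)) (repr_scale _ (repr_mono (leqnSn d) H))).
apply: repr_ext H1 => x /=.
rewrite /aff !mxE mulr_suml; apply: eq_bigr => i _.
by rewrite !mxE; ring.
Qed.

Lemma repr_one n : isrep 0 (fun _ : 'rV['F_2]_n => 1).
Proof.
have := repr_mon (set0 : {set 'I_n}); rewrite cards0; apply: repr_ext => x.
by rewrite big_set0.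
Qed.

Lemma repr_prod_seq n m (N : 'M['F_2]_(n, m)) b (s : seq 'I_m) :
  isrep (size s) (fun x => \prod_(k <- s) aff N b k x).
Proof.
elim: s => [|a s IH].
  by apply: repr_ext (repr_one n) => x; rewrite big_nil.
by apply: repr_ext (@repr_mulaff n m N b a _ _ IH) => x; rewrite big_cons.
Qed.

Lemma repr_prod n m (N : 'M['F_2]_(n, m)) b (A : {set 'I_m}) :
  isrep #|A| (fun x => \prod_(k in A) aff N b k x).
Proof.
rewrite cardE; apply: repr_ext (repr_prod_seq N b (enum A)) => x.
by rewrite big_enum.
Qed.

Local Close Scope ring_scope.

Local Open Scope ring_scope.

Definition chi m (z : {set 'I_m}) : 'rV['F_2]_m := \row_i (i \in z)%:R.

Lemma prod_chi m (T z : {set 'I_m}) :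
  \prod_(i in T) chi z 0 i = (T \subset z)%:R.
Proof.
case: (boolP (T \subset z)) => H.
  by apply: big1 => i iT; rewrite mxE (subsetP H i iT).
have [i iT iz] := subsetPn H.
by rewrite (bigD1 i) //= mxE (negbTE iz) mul0r.
Qed.

Definition tog m (a : 'I_m) (z : {set 'I_m}) := [set x | (x \in z) != (x == a)].

Lemma togK m (a : 'I_m) : involutive (tog a).
Proof.
move=> z; apply/setP => x; rewrite !inE.
by case: (x \in z); case: (x == a).
Qed.

Lemma parity m (g : {set 'I_m} -> 'F_2) (a : 'I_m) (S : {set 'I_m}) :
  a \in S -> (forall z, g (tog a z) = g z) -> \sum_(z : {set 'I_m} | z \subset S) g z = 0.
Proof.
move=> aS Hg.
rewrite (bigID (fun z : {set 'I_m} => a \in z)) /=.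
rewrite (reindex_inj (inv_inj (togK a))) /=.
set X := (X in X + _).
suff -> : X = \sum_(i : {set 'I_m} | (i \subset S) && (a \notin i)) g i by rewrite F2_addrr.
rewrite /X; apply: eq_big => z; last by move=> _; rewrite Hg.
have -> : a \in tog a z = (a \notin z) by rewrite inE eqxx; case: (a \in z).
case: (boolP (a \in z)) => az; rewrite ?andbF ?andbT //.
apply/subsetP/subsetP => H x.
  move=> xz; case: (eqVneq x a) => [->//|xa].
  by apply: H; rewrite inE xz xa.
rewrite inE; case: (eqVneq x a) => [->//|xa]; rewrite /= => xz.
by apply: H; move: xz; case: (x \in z).
Qed.

Lemma mobius_deg2 m (Q : anf m) (S : {set 'I_m}) :
  anf_deg_le Q 2 -> #|S| = 3%N -> \sum_(z : {set 'I_m} | z \subset S) anf_eval Q (chi z) = 0.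
Proof.
move=> HQ HS.
rewrite /anf_eval exchange_big /=; apply: big1 => T TQ.
have HT : (#|T| <= 2)%N by move/forallP: HQ => /(_ T) /implyP; apply.
have : ~~ (S \subset T).
  apply/negP => /subset_leq_card; rewrite HS => H.
  by have := leq_trans H HT.
case/subsetPn => a aS aT.
under eq_bigr => z _ do rewrite prod_chi.
apply: (parity (g := fun z => (T \subset z)%:R) aS) => z.
suff E : (T \subset tog a z) = (T \subset z) by rewrite /= E.
apply/subsetP/subsetP => H x xT.
  have xa : x != a by apply: contraNneq aT => <-.
  by have := H x xT; rewrite inE (negbTE xa); case: (x \in z).
have xa : x != a by apply: contraNneq aT => <-.
by rewrite inE (H x xT) (negbTE xa).
Qed.

Lemma mobius_mon3 m (S0 S : {set 'I_m}) :
  #|S0| = 3%N -> #|S| = 3%N ->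
  \sum_(z : {set 'I_m} | z \subset S) ((S0 \subset z)%:R : 'F_2) = (S0 == S)%:R.
Proof.
move=> H0 H.
case: (eqVneq S0 S) => [->|ne].
  rewrite (bigD1 S) //= subxx big1 ?addr0 // => z /andP [zS zne].
  case: (boolP (S \subset z)) => // Sz.
  by move: zne; rewrite eqEsubset zS Sz.
apply: big1 => z zS; case: (boolP (S0 \subset z)) => // S0z.
have S0S := subset_trans S0z zS.
by move: ne; rewrite eqEcard S0S H H0 leqnn.
Qed.

Local Close Scope ring_scope.

Local Open Scope ring_scope.

Definition K3 m := {S : {set 'I_m} | #|S| == 3%N}.

Definition Psi n m (M : 'M['F_2]_(m, n)) (b : 'rV['F_2]_n) (P : anf n) : {ffun K3 m -> 'F_2} :=
  [ffun S : K3 m => \sum_(z : {set 'I_m} | z \subset val S) anf_eval P (chi z *m M + b)].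

Lemma Psi_symd n m (M : 'M['F_2]_(m, n)) b P Q :
  Psi M b (symd P Q) = Psi M b P + Psi M b Q.
Proof.
apply/ffunP => S; rewrite !ffunE -big_split; apply: eq_bigr => z _.
by rewrite eval_symd.
Qed.

Lemma Psi_kernel n m (M : 'M['F_2]_(m, n)) b P :
  fun_deg_le (fun y => anf_eval P (y *m M + b)) 2 -> Psi M b P = 0.
Proof.
case/existsP => Q /andP [HQ /forallP HE].
apply/ffunP => S; rewrite !ffunE.
rewrite -[RHS](mobius_deg2 HQ (eqP (valP S))); apply: eq_bigr => z _.
exact: eqP (HE (chi z)).
Qed.

Lemma polys3_symd n (P Q : anf n) : P \in polys3 n -> Q \in polys3 n -> symd P Q \in polys3 n.
Proof.
rewrite !inE => HP HQ.
apply/forallP => S; apply/implyP; rewrite inE.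
case HS: (S \in P).
  by move=> _; move/forallP: HP => /(_ S) /implyP; apply.
move=> HS'; move/forallP: HQ => /(_ S) /implyP; apply; move: HS'; by case: (S \in Q).
Qed.

Lemma Psi_surj n m (M : 'M['F_2]_(m, n)) b (T : {ffun K3 m -> 'F_2}) :
  row_free M -> exists P, P \in polys3 n /\ Psi M b P = T.
Proof.
case/row_freeP => N HN.
pose g x := \sum_(S0 : K3 m) T S0 * \prod_(k in val S0) aff N b k x.
have : isrep 3 g.
  apply: (@repr_sum n 3 _ (fun S0 x => T S0 * \prod_(k in val S0) aff N b k x)) => S0.
  apply: repr_scale; have := repr_prod N b (val S0); by rewrite (eqP (valP S0)).
case=> P [HP eP]; exists P; split; first by rewrite inE.
have bb : b + b = 0 by apply/matrixP => i j; rewrite !mxE F2_addrr.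
apply/ffunP => S; rewrite ffunE.
under eq_bigr => z _ do rewrite -eP /g.
under eq_bigr => z _ do under eq_bigr => S0 _ do under eq_bigr => k _ do
  rewrite /aff -addrA bb addr0 -mulmxA HN mulmx1.
under eq_bigr => z _ do under eq_bigr => S0 _ do rewrite prod_chi.
rewrite exchange_big /=.
under eq_bigr => S0 _ do rewrite -mulr_sumr mobius_mon3 ?(eqP (valP S0)) ?(eqP (valP S)) //.
rewrite (bigD1 S) //= eqxx mulr1 big1 ?addr0 // => S0 ne.
suff -> : (val S0 == val S) = false by rewrite mulr0.
by apply/negbTE; move: ne; apply: contra => /eqP /val_inj ->.
Qed.

Lemma card_K3 m : #|{: K3 m}| = 'C(m, 3).
Proof.
rewrite card_sig; have := card_draws ('I_m) 3; rewrite card_ord => <-.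
by apply: eq_card => S; rewrite !inE.
Qed.

Lemma count_kernel n m (M : 'M['F_2]_(m, n)) b :
  row_free M ->
  (#|[set P in polys3 n | Psi M b P == 0%R]| * 2 ^ 'C(m, 3) <= #|polys3 n|)%N.
Proof.
move=> HM.
pose sec T := odflt set0 [pick P in polys3 n | Psi M b P == T].
have secP : forall T, sec T \in polys3 n /\ Psi M b (sec T) = T.
  move=> T; rewrite /sec; case: pickP => [P /andP [H1 /eqP H2] // | H].
  have [P [H1 H2]] := Psi_surj b T HM.
  by have := H P; rewrite H1 H2 eqxx.
pose F (p : anf n * {ffun K3 m -> 'F_2}) := symd p.1 (sec p.2).
set Kset := [set P in polys3 n | Psi M b P == 0].
have inj : {in setX Kset [set: {ffun K3 m -> 'F_2}] &, injective F}.
  move=> [K T] [K' T']; rewrite !inE /= => /andP [/andP [HK /eqP PK] _] /andP [/andP [HK' /eqP PK'] _].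
  rewrite /F /= => E.
  have ET : T = T'.
    have := congr1 (Psi M b) E; rewrite !Psi_symd PK PK' !add0r.
    by case: (secP T) => _ ->; case: (secP T') => _ ->.
  subst T'; congr (_, _).
  apply/setP => S; move/setP: E => /(_ S); rewrite /symd /= !inE.
  by case: (S \in K); case: (S \in K'); case: (S \in sec T).
have sub : F @: (setX Kset [set: {ffun K3 m -> 'F_2}]) \subset polys3 n.
  apply/subsetP => x /imsetP [[K T]]; rewrite !inE /= => /andP [/andP [HK _] _] ->.
  have [H1 _] := secP T; have := @polys3_symd n K (sec T); rewrite /F /= !inE in H1 *; by apply.
have := subset_leq_card sub; rewrite (card_in_imset inj) cardsX cardsT card_ffun card_Fp //.
by rewrite card_K3.
Qed.

Local Close Scope ring_scope.


Lemma card_cover (T I : finType) (A : {set T}) (B : I -> {set T}) :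
  (forall x, x \in A -> exists i, x \in B i) -> #|A| <= \sum_i #|B i|.
Proof.
move=> H.
have E : forall i, #|B i| = \sum_x (if x \in B i then 1 else 0).
  by move=> i; rewrite -sum1_card big_mkcond.
rewrite (eq_bigr _ (fun i _ => E i)) -sum1_card.
rewrite exchange_big /= big_mkcond /=.
apply: leq_sum => x _; case: ifP => // xA.
have [i xi] := H x xA.
by rewrite (bigD1 i) //= xi leq_addr.
Qed.

Lemma Bm_bound n m :
  #|[set P in polys3 n | restr_deg_le m P 2]| * 2 ^ 'C(m, 3)
    <= 2 ^ (m * n) * 2 ^ n * #|polys3 n|.
Proof.
pose B (p : 'M['F_2]_(m, n) * 'rV['F_2]_n) :=
  [set P in polys3 n | row_free p.1 && (Psi p.1 p.2 P == 0%R)].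
have cov : #|[set P in polys3 n | restr_deg_le m P 2]| <= \sum_p #|B p|.
  apply: card_cover => P; rewrite inE => /andP [HP /existsP [M /existsP [b /andP [HM Hd]]]].
  by exists (M, b); rewrite inE HP HM /= (Psi_kernel Hd) eqxx.
apply: (leq_trans (leq_mul cov (leqnn _))).
rewrite big_distrl /=.
apply: (@leq_trans (\sum_(p : 'M['F_2]_(m, n) * 'rV['F_2]_n) #|polys3 n|)).
  apply: leq_sum => [[M b]] _ /=.
  case: (boolP (row_free M)) => HM.
    have -> : B (M, b) = [set P in polys3 n | Psi M b P == 0%R].
      by apply/setP => P; rewrite !inE HM.
    exact: count_kernel.
  have -> : B (M, b) = set0 by apply/setP => P; rewrite !inE (negbTE HM) andbF.
  by rewrite cards0.
by rewrite sum_nat_const card_prod card_mx card_mx card_Fp // mul1n.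
Qed.


Lemma C3_eq m : 'C(m, 3) * 6 = m * (m.-1 * m.-2).
Proof.
have := bin_ffact m 3; rewrite !ffactnS ffactn0 muln1 => ->.
by [].
Qed.

Lemma arith n m : 40 ^ 4 <= n -> n ^ 3 <= m ^ 4 ->
  m * n + n + (n + n ^ 2) <= 'C(m, 3).
Proof.
move=> Hn Hm.
have n1600 : 1600 <= n.
  apply: leq_trans Hn; have : 40 ^ 2 <= 40 ^ 4 by apply: leq_pexp2l.
  by [].
have H1 : 40 * n <= m ^ 2.
  rewrite -leq_sqr -expnM /=; apply: leq_trans Hm.
  rewrite expnMn (expnS n 2) leq_mul2r; apply/orP; right.
  by rewrite (_ : 40 ^ 2 = 1600).
have H2 : 40 * n ^ 2 <= m ^ 3.
  rewrite -(@leq_exp2r _ _ 4) // -expnM /=.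
  have -> : m ^ (3 * 4) = (m ^ 4) ^ 3 by rewrite -expnM.
  apply: (@leq_trans (n ^ 9)); last first.
    by rewrite -expnM expnM (_ : 9 = 3 * 3) // expnM leq_exp2r.
  rewrite expnMn -expnM /= (expnS n 8) leq_mul2r; apply/orP; right.
  exact: Hn.
have m7 : 7 <= m by nia.
rewrite -(leq_pmul2r (isT : 0 < 6)) C3_eq.
case: m Hm H1 H2 m7 => [|[|k]] //= Hm H1 H2 m7.
nia.
Qed.


Lemma bad_bound n : 40 ^ 4 <= n -> #|bad3 n| * 2 ^ (n ^ 2) <= #|polys3 n|.
Proof.
move=> Hn.
pose B (m : 'I_n.+1) :=
  if n ^ 3 <= m ^ 4 then [set P in polys3 n | restr_deg_le m P 2] else set0.
have cov : #|bad3 n| <= \sum_m #|B m|.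
  apply: card_cover => P; rewrite inE => /andP [HP /existsP [m /andP [Hm Hr]]].
  have Hm' : n ^ 3 <= m ^ 4 := Hm.
  by exists m; rewrite /B Hm' inE HP Hr.
have each : forall m, #|B m| * 2 ^ (n + n ^ 2) <= #|polys3 n|.
  move=> m; rewrite /B; case: ifP => H; last by rewrite cards0.
  have HB := Bm_bound n m; have A := arith Hn H.
  rewrite -(@leq_pmul2r (2 ^ (m * n) * 2 ^ n)); last by rewrite muln_gt0 !expn_gt0.
  rewrite [X in _ <= X]mulnC; apply: leq_trans HB.
  rewrite -mulnA -!expnD; apply: leq_mul => //; apply: leq_pexp2l => //.
  by rewrite addnC.
have : #|bad3 n| * 2 ^ (n + n ^ 2) <= 2 ^ n * #|polys3 n|.
  apply: leq_trans (leq_mul cov (leqnn _)) _; rewrite big_distrl /=.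
  apply: (@leq_trans (\sum_(m < n.+1) #|polys3 n|)); first exact: leq_sum (fun m _ => each m).
  rewrite big_const_ord iter_addn_0 mulnC leq_mul2r; apply/orP; right.
  exact: ltn_expl.
by rewrite expnD mulnA [_ * 2 ^ n]mulnC -mulnA leq_pmul2l ?expn_gt0.
Qed.


From Stdlib Require Import Reals Lra.

Lemma INR_expn2 k : INR (expn 2 k) = (2 ^ k)%R.
Proof.
elim: k => [|k IH]; first by rewrite expn0 /=.
by rewrite expnS mulnE mult_INR IH /=.
Qed.

Theorem mainTheorem10 :
  exists c : R, (0 < c)%R /\
  exists N : nat, forall n : nat, (N <= n)%N ->
    (INR #|bad3 n| <= Rpower 2 (- c * (INR n ^ 2)) * INR #|polys3 n|)%R.
Proof.
exists 1%R; split; first lra.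
exists (expn 40 4) => n Hn.
have H := bad_bound Hn.
move/leP: H => /le_INR; rewrite mulnE mult_INR INR_expn2 => H.
have -> : (- 1 * INR n ^ 2 = - INR (expn n 2))%R.
  by rewrite (_ : expn n 2 = muln n n) // mulnE mult_INR /=; ring.
rewrite Rpower_Ropp Rpower_pow; last lra.
have pos : (0 < 2 ^ expn n 2)%R by apply: pow_lt; lra.
apply: (Rmult_le_reg_r (2 ^ expn n 2)) => //.
replace (/ 2 ^ expn n 2 * INR #|polys3 n| * 2 ^ expn n 2)%R with (INR #|polys3 n|).
  exact: H.
by field; lra.
Qed.
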